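(* For every real $x\ge 2$, $$\frac{x}{\zeta(2)}-\log x\;\le\;\sum_{n\le x}\frac{\varphi(n)}{n}\;\le\;\frac{x}{\zeta(2)}+\log x .$$
   Context: $\varphi$ is Euler's totient function, $\zeta$ is the Riemann zeta function (so $\zeta(2)=\pi^2/6$), $\log$ is the natural logarithm, and the sum runs over positive integers $n\le x$. *)

(* Defs.v *)
From Stdlib Require Import Reals ZArith.
From mathcomp Require Import all_boot.
Open Scope R_scope.

Definition zeta2 : R := PI ^ 2 / 6.

(* floor of a real as a natural number (x >= 0 intended) *)
Definition nat_floor (x : R) : nat := Z.to_nat (Int_part x).

Fixpoint phi_over_n_sum (N : nat) : R :=
  match N with
  | O => 0
  | S m => phi_over_n_sum m + INR (totient (S m)) / INR (S m)
  end.

Definition sum_phi_over_n (x : R) : R := phi_over_n_sum (nat_floor x).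

(* Main.v *)
Require Import Defs.
From Stdlib Require Import Reals.
Open Scope R_scope.

(* Proof overview:
   - Basel problem with explicit tail bounds via Matsuoka's integral identities
     (Coquelicot Riemann integrals);
   - Moebius function, sum_{d|n} mu d = [n=1], phi(n)/n = sum_{d|n} mu(d)/d;
   - S(N) - x/zeta2 = sum_{d<=N} mu(d)/d * g(x/d) with |g| <= 1/zeta2, so
     |S - x/zeta2| <= H_N / zeta2 <= ln x for N >= 7; small N by computation. *)

From Stdlib Require Import Lra Lia ZArith.
From Coquelicot Require Coquelicot.

Module Basel.
Import Coquelicot.Coquelicot.

Lemma contR (f : R -> R) x : ex_derive f x -> continuous f x.
Proof. apply (ex_derive_continuous (K:=R_AbsRing) (V:=R_NormedModule)). Qed.

Lemma minusR (a b : R) : minus a b = a - b. Proof. reflexivity. Qed.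
Lemma plusR (a b : R) : plus a b = a + b. Proof. reflexivity. Qed.
Lemma oppR (a : R) : opp a = - a. Proof. reflexivity. Qed.
Lemma scalR (a b : R) : scal a b = a * b. Proof. reflexivity. Qed.

Definition fA (m : nat) (x : R) := cos x ^ (2*m).
Definition fB (m : nat) (x : R) := x^2 * cos x ^ (2*m).
Definition AI m : R := RInt (fA m) 0 (PI/2).
Definition BI m : R := RInt (fB m) 0 (PI/2).

Lemma exA m : ex_RInt (fA m) 0 (PI/2).
Proof. apply (ex_RInt_continuous (V:=R_CompleteNormedModule)); intros; apply contR; unfold fA; auto_derive; auto. Qed.
Lemma exB m : ex_RInt (fB m) 0 (PI/2).
Proof. apply (ex_RInt_continuous (V:=R_CompleteNormedModule)); intros; apply contR; unfold fB; auto_derive; auto. Qed.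

Lemma isA m : is_RInt (fA m) 0 (PI/2) (AI m).
Proof. apply (RInt_correct (V:=R_CompleteNormedModule)), exA. Qed.
Lemma isB m : is_RInt (fB m) 0 (PI/2) (BI m).
Proof. apply (RInt_correct (V:=R_CompleteNormedModule)), exB. Qed.

Lemma cos_pi2_pow k : cos (PI/2) ^ (S k) = 0.
Proof. rewrite cos_PI2; simpl; ring. Qed.

Lemma A_rec m : 2 * INR (S m) * AI (S m) = (2 * INR m + 1) * AI m.
Proof.
  set (F := fun x => sin x * cos x ^ (2*m+1)).
  set (h := fun x => 2 * INR (S m) * fA (S m) x - (2 * INR m + 1) * fA m x).
  assert (H1 : is_RInt h 0 (PI/2) (minus (F (PI/2)) (F 0))).
  { apply (is_RInt_derive (V:=R_CompleteNormedModule)).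
    - intros x _. unfold F, h, fA.
      auto_derive; auto.
      replace (m + (m + 0) + 1)%nat with (S (2*m)) by lia.
      replace (S (2*m) + 1)%nat with (S (S (2*m))) by lia.
      simpl pred. rewrite !S_INR, !mult_INR.
      replace (m+(m+0))%nat with (2*m)%nat by lia.
      replace (2 * S m)%nat with (S (S (2*m))) by lia.
      rewrite <- !tech_pow_Rmult.
      pose proof (sin2_cos2 x) as Hs. unfold Rsqr in Hs.
      replace (INR 2) with 2 by (simpl; ring).
      set (k := cos x ^ (2*m)) in *.
      match goal with |- ?L = ?R => assert (E: L - R = (2*INR m+1)*k*(1 - (sin x * sin x + cos x * cos x))) by ring end.
      rewrite Hs, Rminus_diag, Rmult_0_r in E. lra.
    - intros x _. apply contR; unfold h, fA; auto_derive; auto. }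
  assert (H2 : is_RInt h 0 (PI/2) (2 * INR (S m) * AI (S m) - (2 * INR m + 1) * AI m)).
  { apply (is_RInt_minus (V:=R_CompleteNormedModule) (fun x => 2 * INR (S m) * fA (S m) x) (fun x => (2 * INR m + 1) * fA m x)).
    - apply (is_RInt_scal (V:=R_CompleteNormedModule) (fA (S m)) 0 (PI/2) (2 * INR (S m))), isA.
    - apply (is_RInt_scal (V:=R_CompleteNormedModule) (fA m) 0 (PI/2) (2 * INR m + 1)), isA. }
  apply (is_RInt_unique (V:=R_CompleteNormedModule)) in H1. apply (is_RInt_unique (V:=R_CompleteNormedModule)) in H2.
  rewrite H2 in H1. unfold F in H1. rewrite sin_0, sin_PI2 in H1.
  replace (2*m+1)%nat with (S (2*m)) in H1 by lia.
  rewrite cos_pi2_pow in H1. unfold minus, plus, opp in H1; cbn -[INR AI cos pow] in H1. lra.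
Qed.

Lemma B_rec m : AI (S m) + 2 * (INR m + 1)^2 * BI (S m) - (INR m + 1) * (2 * INR m + 1) * BI m = 0.
Proof.
  set (F := fun x => x * cos x ^ (2*m+2) + (INR m + 1) * (x^2 * sin x * cos x ^ (2*m+1))).
  set (h := fun x => fA (S m) x + 2 * (INR m + 1)^2 * fB (S m) x - (INR m + 1) * (2 * INR m + 1) * fB m x).
  assert (H1 : is_RInt h 0 (PI/2) (minus (F (PI/2)) (F 0))).
  { apply (is_RInt_derive (V:=R_CompleteNormedModule)).
    - intros x _. unfold F, h, fA, fB.
      auto_derive; auto.
      replace (m+(m+0)+2)%nat with (S (S (2*m))) by lia.
      replace (m+(m+0)+1)%nat with (S (2*m)) by lia.
      replace (2 * S m)%nat with (S (S (2*m))) by lia.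
      simpl pred. rewrite ?S_INR, ?mult_INR.
      replace (m+(m+0))%nat with (2*m)%nat by lia.
      rewrite <- !tech_pow_Rmult.
      pose proof (sin2_cos2 x) as Hs. unfold Rsqr in Hs.
      replace (INR 2) with 2 by (simpl; ring).
      set (k := cos x ^ (2*m)) in *.
      match goal with |- ?L = ?R => assert (E: L - R = (INR m+1)*(2*INR m+1)*x*x*k*(1 - (sin x * sin x + cos x * cos x))) by ring end.
      rewrite Hs, Rminus_diag, Rmult_0_r in E. lra.
    - intros x _. apply contR; unfold h, fA, fB; auto_derive; auto. }
  assert (H2 : is_RInt h 0 (PI/2) (plus (plus (AI (S m)) (scal (2 * (INR m + 1)^2) (BI (S m)))) (opp (scal ((INR m + 1) * (2 * INR m + 1)) (BI m))))).
  { apply (is_RInt_plus (V:=R_CompleteNormedModule)).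
    - apply (is_RInt_plus (V:=R_CompleteNormedModule)).
      + apply isA.
      + apply (is_RInt_scal (V:=R_CompleteNormedModule)), isB.
    - apply (is_RInt_opp (V:=R_CompleteNormedModule)).
      apply (is_RInt_scal (V:=R_CompleteNormedModule)), isB. }
  apply (is_RInt_unique (V:=R_CompleteNormedModule)) in H1. apply (is_RInt_unique (V:=R_CompleteNormedModule)) in H2.
  rewrite H2 in H1. unfold F in H1. rewrite sin_0, sin_PI2 in H1.
  replace (2*m+1)%nat with (S (2*m)) in H1 by lia.
  replace (2*m+2)%nat with (S (S (2*m))) in H1 by lia.
  rewrite !cos_pi2_pow in H1. cbv [minus plus opp scal] in H1. cbn -[INR AI BI cos pow] in H1.
  unfold mult in H1; cbn -[INR AI BI cos pow] in H1. lra.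
Qed.

Lemma A0 : AI 0 = PI/2.
Proof.
  assert (H : is_RInt (fA 0) 0 (PI/2) (minus ((fun x => x) (PI/2)) ((fun x => x) 0))).
  { apply (is_RInt_derive (V:=R_CompleteNormedModule) (fun x => x)).
    - intros x _. unfold fA. auto_derive; auto; simpl; ring.
    - intros x _. apply contR; unfold fA; auto_derive; auto. }
  apply (is_RInt_unique (V:=R_CompleteNormedModule)) in H. unfold AI. rewrite H.
  rewrite minusR. lra.
Qed.

Lemma B0 : BI 0 = PI^3/24.
Proof.
  assert (H : is_RInt (fB 0) 0 (PI/2) (minus ((fun x => x^3/3) (PI/2)) ((fun x => x^3/3) 0))).
  { apply (is_RInt_derive (V:=R_CompleteNormedModule) (fun x => x^3/3)).
    - intros x _. unfold fB. auto_derive; auto; simpl; field.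
    - intros x _. apply contR; unfold fB; auto_derive; auto. }
  apply (is_RInt_unique (V:=R_CompleteNormedModule)) in H. unfold BI. rewrite H.
  rewrite minusR. cut ((PI/2)^3/3 - 0^3/3 = PI^3/24). auto. field.
Qed.

Lemma A_pos m : 0 < AI m.
Proof.
  induction m.
  - rewrite A0. pose proof PI_RGT_0. lra.
  - pose proof (A_rec m) as H. pose proof (pos_INR m).
    rewrite S_INR in H.
    assert (AI (S m) = (2 * INR m + 1) * AI m / (2 * (INR m + 1))) by (rewrite <- H; field; lra).
    rewrite H1. apply Rdiv_lt_0_compat; [apply Rmult_lt_0_compat|]; lra.
Qed.

Lemma cos_pow_nonneg m x : 0 <= x <= PI/2 -> 0 <= cos x ^ (2*m).
Proof.
  intros Hx. apply pow_le. apply cos_ge_0; lra.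
Qed.

Lemma B_nonneg m : 0 <= BI m.
Proof.
  apply RInt_ge_0. pose proof PI_RGT_0; lra. apply exB.
  intros x Hx. unfold fB. apply Rmult_le_pos. apply pow2_ge_0. apply cos_pow_nonneg; lra.
Qed.

Lemma PI_bounds : 3.1415 < PI < 3.1417.
Proof.
  destruct (PI_2_3_7_ineq 2) as [H1 H2].
  unfold tg_alt, PI_2_3_7_tg, Ratan_seq in H1, H2.
  simpl in H1, H2. lra.
Qed.

Lemma sin_half x : 0 <= x <= 1.6 -> x / 2 <= sin x.
Proof.
  intros Hx. pose proof PI_bounds as HPI.
  destruct (SIN x) as [H _]; try lra.
  assert (E: sin_lb x = x - x^3/6 + x^5/120 - x^7/5040) by (unfold sin_lb, sin_approx, sin_term; simpl; field).
  rewrite E in H. clear E.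
  set (u := x*x).
  assert (Hu: 0 <= u <= 2.56) by (unfold u; nra).
  assert (Hp: 0 <= 1/2 - u/6 + u*u/120 - u*u*u/5040).
  { destruct Hu. assert (0 <= u*u) by nra. assert (u*u*u <= 2.56*2.56*2.56) by (apply Rmult_le_compat; nra). lra. }
  assert (x - x^3/6 + x^5/120 - x^7/5040 - x/2 = x * (1/2 - u/6 + u*u/120 - u*u*u/5040)) by (unfold u; simpl; field).
  assert (0 <= x * (1/2 - u/6 + u*u/120 - u*u*u/5040)) by (apply Rmult_le_pos; lra).
  lra.
Qed.

Lemma B_le m : BI m <= 4 * (AI m - AI (S m)).
Proof.
  pose proof PI_bounds.
  assert (Hg : is_RInt (fun x => 4 * (fA m x - fA (S m) x)) 0 (PI/2) (4 * (AI m - AI (S m)))).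
  { apply (is_RInt_scal (V:=R_CompleteNormedModule) (fun x => fA m x - fA (S m) x)).
    apply (is_RInt_minus (V:=R_CompleteNormedModule)); apply isA. }
  apply (is_RInt_unique (V:=R_CompleteNormedModule)) in Hg.
  rewrite <- Hg. apply RInt_le. lra. apply exB.
  apply (ex_RInt_continuous (V:=R_CompleteNormedModule)); intros; apply contR; unfold fA; auto_derive; auto.
  intros x Hx. unfold fA, fB.
  replace (2 * S m)%nat with (2*m + 2)%nat by lia. rewrite pow_add.
  pose proof (sin_half x ltac:(lra)) as Hs.
  pose proof (sin2_cos2 x) as Hc. unfold Rsqr in Hc.
  pose proof (cos_pow_nonneg m x ltac:(lra)) as Hk.
  set (k := cos x ^ (2*m)) in *.
  assert (x^2 <= 4 * (sin x * sin x)) by nra.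
  replace (4 * (k - k * cos x ^ 2)) with (4 * (sin x * sin x) * k) by (simpl; nra).
  apply Rmult_le_compat_r; lra.
Qed.

Definition EE m := 2 * BI m / AI m.

Lemma EE_step m : EE m - EE (S m) = 1 / (INR (S m))^2.
Proof.
  unfold EE. pose proof (A_rec m) as H1. pose proof (B_rec m) as H2.
  pose proof (A_pos m). pose proof (A_pos (S m)). pose proof (pos_INR m).
  rewrite S_INR in *.
  assert (HA : AI (S m) = (2 * INR m + 1) * AI m / (2 * (INR m + 1))) by (rewrite <- H1; field; lra).
  assert (HB0 : 2*(INR m+1)^2 * BI (S m) = (INR m + 1) * (2 * INR m + 1) * BI m - AI (S m)) by lra.
  assert (HB : BI (S m) = ((INR m + 1) * (2 * INR m + 1) * BI m - AI (S m)) / (2 * (INR m + 1)^2)) by (rewrite <- HB0; field; lra).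
  rewrite HB. rewrite HA. field. split; lra.
Qed.

Lemma EE_bounds m : 0 <= EE m <= 4 / (INR m + 1).
Proof.
  unfold EE. pose proof (A_pos m). pose proof (A_pos (S m)). pose proof (B_nonneg m). pose proof (B_le m).
  pose proof (A_rec m) as HR. pose proof (pos_INR m). rewrite S_INR in HR.
  split. apply Rmult_le_pos; [lra | left; apply Rinv_0_lt_compat; lra].
  assert (HA : AI (S m) = (2 * INR m + 1) * AI m / (2 * (INR m + 1))) by (rewrite <- HR; field; lra).
  rewrite HA in H2.
  apply Rle_trans with (2 * (4 * (AI m - (2 * INR m + 1) * AI m / (2 * (INR m + 1)))) / AI m).
  - unfold Rdiv. apply Rmult_le_compat_r. left; apply Rinv_0_lt_compat; lra. lra.
  - right. field. lra.
Qed.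

Lemma EE0 : EE 0 = PI^2/6.
Proof. unfold EE. rewrite A0, B0. field. pose proof PI_RGT_0; lra. Qed.

Fixpoint h2 (n : nat) : R := match n with O => 0 | S m => h2 m + 1 / (INR (S m))^2 end.

Lemma basel_id n : h2 n + EE n = PI^2/6.
Proof.
  induction n. simpl h2. rewrite EE0; ring.
  change (h2 (S n)) with (h2 n + 1/(INR (S n))^2). pose proof (EE_step n). lra.
Qed.

Lemma h2_diff k j : (1 <= k)%nat ->
  1 / (INR k + 1) - 1 / (INR (k + j) + 1) <= h2 (k + j) - h2 k <= 1 / INR k - 1 / INR (k + j).
Proof.
  intros Hk. assert (HK : 1 <= INR k) by (apply (le_INR 1); auto).
  induction j.
  - rewrite Nat.add_0_r. lra.
  - replace (k + S j)%nat with (S (k + j)) by lia.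
    change (h2 (S (k + j))) with (h2 (k+j) + 1/(INR (S (k+j)))^2).
    rewrite S_INR. set (M := INR (k + j)) in *.
    assert (HM : INR k <= M) by (apply le_INR; lia).
    assert (1 / (M + 1) ^ 2 <= 1 / M - 1 / (M + 1)).
    { unfold Rdiv. rewrite !Rmult_1_l. apply Rle_trans with (/ (M * (M+1))).
      apply Rinv_le_contravar; nra. right. field. lra. }
    assert (1 / (M + 1) - 1 / (M + 1 + 1) <= 1 / (M + 1) ^ 2).
    { replace (1 / (M + 1) - 1 / (M + 1 + 1)) with (/ ((M+1) * (M+2))) by (field; lra).
      unfold Rdiv. rewrite Rmult_1_l. apply Rinv_le_contravar; nra. }
    lra.
Qed.

Lemma tail_bounds k : (1 <= k)%nat -> 1 / (INR k + 1) <= EE k <= 1 / INR k.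
Proof.
  intros Hk. assert (HK : 1 <= INR k) by (apply (le_INR 1); auto).
  assert (Hgen : forall j, 1 / (INR k + 1) - 1 / (INR (k + j) + 1) <= EE k <= 1 / INR k + 4 / (INR (k + j) + 1)).
  { intros j. destruct (h2_diff k j Hk) as [Ha Hb].
    pose proof (basel_id k). pose proof (basel_id (k + j)).
    destruct (EE_bounds (k + j)) as [Hc Hd].
    assert (0 < INR (k+j)) by (apply lt_0_INR; lia).
    assert (0 <= 1 / INR (k + j)) by (unfold Rdiv; rewrite Rmult_1_l; left; apply Rinv_0_lt_compat; lra).
    lra. }
  split.
  - destruct (Rle_or_lt (1 / (INR k + 1)) (EE k)) as [H|H]; [exact H|].
    exfalso. set (eps := 1 / (INR k + 1) - EE k).
    destruct (INR_unbounded (1 / eps)) as [j Hj].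
    destruct (Hgen j) as [Ha _].
    assert (Hj' : INR j <= INR (k + j)) by (apply le_INR; lia).
    assert (0 < eps) by (unfold eps; lra).
    assert (1 / (INR (k + j) + 1) < eps).
    { assert (E : 1 / (1/eps) = eps) by (field; lra). rewrite <- E.
      unfold Rdiv. rewrite !Rmult_1_l. apply Rinv_lt_contravar.
      apply Rmult_lt_0_compat. apply Rinv_0_lt_compat; lra. pose proof (pos_INR j); lra.
      unfold Rdiv in Hj. lra. }
    unfold eps in *. lra.
  - destruct (Rle_or_lt (EE k) (1 / INR k)) as [H|H]; [exact H|].
    exfalso. set (eps := EE k - 1 / INR k).
    destruct (INR_unbounded (4 / eps)) as [j Hj].
    destruct (Hgen j) as [_ Hb].
    assert (Hj' : INR j <= INR (k + j)) by (apply le_INR; lia).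
    assert (0 < eps) by (unfold eps; lra).
    assert (4 / (INR (k + j) + 1) < eps).
    { assert (E : 4 / (4/eps) = eps) by (field; lra). rewrite <- E.
      unfold Rdiv. apply Rmult_lt_compat_l. lra. apply Rinv_lt_contravar.
      apply Rmult_lt_0_compat. apply Rmult_lt_0_compat. lra. apply Rinv_0_lt_compat; lra. pose proof (pos_INR j); lra. unfold Rdiv in Hj. lra. }
    unfold eps in *. lra.
Qed.

End Basel.
Import Basel.

From HB Require Import structures.
From mathcomp Require Import all_boot.
Open Scope R_scope.

HB.instance Definition _ := Monoid.isComLaw.Build R 0 Rplus (fun a b c => esym (Rplus_assoc a b c)) Rplus_comm Rplus_0_l.


Definition sqf (n : nat) : bool := (0 < n)%N && all (fun p => ~~ (p * p %| n))%N (primes n).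
Definition mu (n : nat) : R := if sqf n then (-1) ^ (size (primes n)) else 0.
Definition dsum (n : nat) (F : nat -> R) : R := \big[Rplus/0]_(d <- divisors n) F d.

Lemma mu1 : mu 1 = 1.
Proof. rewrite /mu /sqf. have -> : primes 1 = [::] by []. by rewrite /=; lra. Qed.

Lemma mu_abs n : Rabs (mu n) <= 1.
Proof.
rewrite /mu; case: (sqf n); last by rewrite Rabs_R0; lra.
by rewrite -RPow_abs Rabs_Ropp Rabs_R1 pow1; lra.
Qed.

Lemma mu_sq p d : prime p -> (0 < d)%N -> (p * p %| d)%N -> mu d = 0.
Proof.
move=> pp d0 hd; rewrite /mu /sqf.
have -> : all (fun p0 => ~~ (p0 * p0 %| d))%N (primes d) = false.
  apply/negbTE/negP => /allP /(_ p).
  rewrite mem_primes pp d0 /= (dvdn_trans (dvdn_mulr p (dvdnn p)) hd) hd.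
  by move/(_ isT).
by rewrite andbF.
Qed.

Lemma primes_pd p d : prime p -> ~~ (p %| d)%N -> (0 < d)%N -> perm_eq (primes (p * d)) (p :: primes d).
Proof.
move=> pp npd d0; apply: uniq_perm.
- exact: primes_uniq.
- rewrite /= primes_uniq andbT mem_primes pp d0 /=; exact: npd.
- move=> q; rewrite (primesM _ (prime_gt0 pp) d0) (primes_prime pp) !inE.
  done.
Qed.

Lemma mu_pd p d : prime p -> ~~ (p %| d)%N -> (0 < d)%N -> mu (p * d) = - mu d.
Proof.
move=> pp npd d0.
have hperm := primes_pd p d pp npd d0.
rewrite /mu /sqf (perm_size hperm) (perm_all _ hperm) /= muln_gt0 prime_gt0 // d0 /=.
have -> : ~~ (p * p %| p * d)%N.
  by rewrite dvdn_pmul2l ?prime_gt0.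
have -> : all (fun p0 => ~~ (p0 * p0 %| p * d))%N (primes d) = all (fun p0 => ~~ (p0 * p0 %| d))%N (primes d).
  apply: eq_in_all => q; rewrite mem_primes => /and3P[qp _ qd].
  have qnp : q != p by apply: contraNneq npd => <-.
  have cq : coprime (q * q) p.
    rewrite coprimeMl prime_coprime // andbb.
    by rewrite dvdn_prime2 // eq_sym.
  by rewrite Gauss_dvdr.
by case: (all _ _) => /=; lra.
Qed.

Lemma dsplit p a m F : prime p -> (0 < a)%N -> (0 < m)%N -> ~~ (p %| m)%N ->
  (forall d, (p * p %| d)%N -> F d = 0) ->
  dsum (p ^ a * m) F = dsum m F + dsum m (fun d => F (p * d)%N).
Proof.
move=> pp a0 m0 npm hF.
have p0 : (0 < p)%N by exact: prime_gt0.
have n0 : (0 < p ^ a * m)%N by rewrite muln_gt0 expn_gt0 p0 m0.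
have pinj : injective (muln p) by move=> x y /eqP; rewrite eqn_pmul2l // => /eqP.
have hpa : (p ^ a = p * p ^ a.-1)%N by rewrite -expnS prednK.
rewrite /dsum.
have -> : forall s, \big[Rplus/0]_(d <- s) F d = \big[Rplus/0]_(d <- s | ~~ (p * p %| d)%N) F d.
  by move=> s; rewrite [RHS]big_mkcond; apply: eq_bigr => i _; case: ifP => // /negbFE /hF.
rewrite -big_filter.
rewrite (perm_big (divisors m ++ map (muln p) (divisors m))); last first.
  apply: uniq_perm.
  - by rewrite filter_uniq // divisors_uniq.
  - rewrite cat_uniq divisors_uniq (map_inj_uniq pinj) divisors_uniq /= andbT.
    apply/hasPn => x /mapP [e he ->]; rewrite -dvdn_divisors //.
    apply/negP => hpe; move/negP: npm; apply.
    exact: dvdn_trans (dvdn_mulr e (dvdnn p)) hpe.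
  - move=> d; rewrite mem_filter mem_cat -!dvdn_divisors //.
    apply/idP/idP.
    + case/andP => h1 h2.
      case hpd : (p %| d)%N.
      * move/dvdnP: hpd => [e he]; subst d.
        apply/orP; right; apply/mapP; exists e; last by rewrite mulnC.
        have npe : ~~ (p %| e)%N.
          apply/negP => hpe; move/negP: h1; apply.
          by rewrite dvdn_pmul2r.
        rewrite -dvdn_divisors //.
        move: h2; rewrite hpa -mulnA (mulnC e) dvdn_pmul2l //.
        rewrite Gauss_dvdr //.
        by rewrite coprimeXr // coprime_sym prime_coprime.
      * apply/orP; left.
        move: h2; rewrite Gauss_dvdr //.
        by rewrite coprimeXr // coprime_sym prime_coprime // hpd.
    + case/orP.
      * move=> hd; apply/andP; split; last by rewrite dvdn_mull.
        apply/negP => hpd; move/negP: npm; apply.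
        exact: dvdn_trans (dvdn_mulr p (dvdnn p)) (dvdn_trans hpd hd).
      * move/mapP => [e he ->]; move: he; rewrite -dvdn_divisors // => he.
        apply/andP; split.
        - rewrite dvdn_pmul2l //; apply/negP => hpe; move/negP: npm; apply.
          exact: dvdn_trans hpe he.
        - by rewrite hpa -mulnA dvdn_pmul2l // dvdn_mull.
by rewrite big_cat big_map.
Qed.

Lemma mu0 : mu 0 = 0.
Proof. by []. Qed.

Lemma mu_sq' p d : prime p -> (p * p %| d)%N -> mu d = 0.
Proof.
move=> pp hd; case: (posnP d) => [->|d0]; first exact: mu0.
exact: mu_sq pp d0 hd.
Qed.

Lemma decomp n : (1 < n)%N -> exists p a m, [/\ prime p, (0 < a)%N, (0 < m)%N, ~~ (p %| m)%N & n = (p ^ a * m)%N /\ (m < n)%N].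
Proof.
move=> n1.
have n0 : (0 < n)%N by apply: ltn_trans n1.
have pp := pdiv_prime n1.
case: (pfactor_coprime pp n0) => m cpm hn.
have a0 : (0 < logn (pdiv n) n)%N by rewrite logn_gt0 mem_primes pp n0 pdiv_dvd.
have m0 : (0 < m)%N by move: n0; rewrite hn muln_gt0 => /andP[].
exists (pdiv n), (logn (pdiv n) n), m; split => //.
- by rewrite -prime_coprime.
- split; first by rewrite mulnC.
  rewrite [X in (m < X)%N]hn ltn_Pmulr //.
  by rewrite -(expn0 (pdiv n)) ltn_exp2l ?prime_gt1.
Qed.

Lemma divisors1 : divisors 1 = [:: 1%N].
Proof. by []. Qed.

Lemma dsum1 F : dsum 1 F = F 1%N.
Proof. by rewrite /dsum divisors1 big_seq1. Qed.

Lemma mu_sum n : (1 < n)%N -> dsum n mu = 0.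
Proof.
move=> /decomp [p [a [m [pp a0 m0 npm [-> _]]]]].
rewrite (dsplit p a m mu pp a0 m0 npm); last by move=> d; apply: mu_sq'.
rewrite /dsum -big_split /=; apply: big1_seq => d; rewrite -dvdn_divisors // => hd.
have d0 : (0 < d)%N by apply: dvdn_gt0 hd.
rewrite mu_pd //; first lra.
by apply: contraNN npm => /dvdn_trans; apply.
Qed.

Lemma big_scaleR (s : seq nat) (c : R) (F : nat -> R) :
  \big[Rplus/0]_(i <- s) (c * F i) = c * \big[Rplus/0]_(i <- s) F i.
Proof.
elim: s => [|x s IH]; first by rewrite !big_nil; ring.
by rewrite !big_cons IH; ring.
Qed.

Lemma INR_pos n : (0 < n)%N -> 0 < INR n.
Proof. by move=> h; apply: lt_0_INR; apply/ltP. Qed.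

Lemma INR_neq0 n : (0 < n)%N -> INR n <> 0.
Proof. by move=> /INR_pos; lra. Qed.

Lemma phi_sum n : (0 < n)%N -> dsum n (fun d => mu d / INR d) = INR (totient n) / INR n.
Proof.
elim/ltn_ind: n => n IH n0.
case: (ltngtP n 1) => [|n1|->]; first by rewrite ltnS leqn0 => /eqP n00; move: n0; rewrite n00.
- move: (n1) => /decomp [p [a [m [pp a0 m0 npm [hn hm]]]]].
  have p0 : (0 < p)%N by exact: prime_gt0.
  rewrite hn (dsplit p a m _ pp a0 m0 npm); last first.
    by move=> d hd; rewrite (mu_sq' p d pp hd) /Rdiv Rmult_0_l.
  rewrite /dsum.
  have -> : \big[Rplus/0]_(d <- divisors m) (mu (p * d)%N / INR (p * d)%N)
          = \big[Rplus/0]_(d <- divisors m) ((- / INR p) * (mu d / INR d)).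
    apply: eq_big_seq => d; rewrite -dvdn_divisors // => hd.
    have d0 : (0 < d)%N by apply: dvdn_gt0 hd.
    rewrite mu_pd //; last by apply: contraNN npm => /dvdn_trans; apply.
    rewrite mult_INR; field; split; apply: INR_neq0 => //.
  have hs := big_scaleR (divisors m) (- / INR p) (fun d => mu d / INR d); rewrite /= in hs.
  rewrite hs; have := IH m hm m0; rewrite /dsum => ->.
  have cpm : coprime (p ^ a) m by rewrite coprimeXl // prime_coprime.
  rewrite totient_coprime // totient_pfactor //.
  have hq : (p ^ a = p * p ^ a.-1)%N by rewrite -expnS prednK.
  rewrite hq !mult_INR.
  have hp1 : INR p.-1 = INR p - 1.
    by rewrite -{2}(prednK p0) S_INR; ring.
  rewrite hp1.
  have := INR_pos p p0; have := INR_pos m m0.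
  have : 0 < INR (p ^ a.-1) by apply: INR_pos; rewrite expn_gt0 p0.
  move=> h1 h2 h3; field; lra.
- by rewrite dsum1 mu1 /=.
Qed.

Definition bsum (k : nat) (F : nat -> R) : R := \big[Rplus/0]_(1 <= e < k.+1) F e.

Lemma bsumS k F : bsum k.+1 F = bsum k F + F k.+1.
Proof. by rewrite /bsum big_nat_recr. Qed.

Lemma bsum0 F : bsum 0 F = 0.
Proof. by rewrite /bsum big_geq. Qed.

Lemma dsum_iota n G : (0 < n)%N ->
  dsum n G = \big[Rplus/0]_(1 <= d < n.+1) (if (d %| n)%N then G d else 0).
Proof.
move=> n0; rewrite -big_mkcond -big_filter /dsum; apply: perm_big.
apply: uniq_perm.
- exact: divisors_uniq.
- by rewrite filter_uniq // iota_uniq.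
- move=> d; rewrite mem_filter -dvdn_divisors // mem_index_iota.
  apply/idP/idP => [hd|/andP[]//].
  by rewrite hd (dvdn_gt0 n0 hd) /= ltnS dvdn_leq.
Qed.

Lemma rearr (a b : nat -> R) N :
  \big[Rplus/0]_(1 <= d < N.+1) (a d * bsum (N %/ d) b)
  = \big[Rplus/0]_(1 <= m < N.+1) dsum m (fun d => a d * b (m %/ d)%N).
Proof.
elim: N => [|N IH]; first by rewrite !big_geq.
rewrite [RHS]big_nat_recr //= -IH (dsum_iota _ _ (ltn0Sn N)).
have -> : \big[Rplus/0]_(1 <= d < N.+1) (a d * bsum (N %/ d) b) = \big[Rplus/0]_(1 <= d < N.+2) (a d * bsum (N %/ d) b).
  by rewrite [RHS]big_nat_recr //= divn_small // bsum0 Rmult_0_r Rplus_0_r.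
rewrite -big_split /=.
apply: eq_big_nat => d /andP [d1 _].
rewrite divnS; last exact: d1.
case: (d %| N.+1)%N => /=.
- rewrite add1n bsumS; ring.
- rewrite add0n; ring.
Qed.

Lemma P_big N : phi_over_n_sum N = \big[Rplus/0]_(1 <= m < N.+1) (INR (totient m) / INR m).
Proof.
elim: N => [|N IH]; first by rewrite big_geq.
by rewrite big_nat_recr //= IH.
Qed.

Lemma bsum_one k : bsum k (fun _ => 1) = INR k.
Proof.
elim: k => [|k IH]; first by rewrite bsum0.
by rewrite bsumS IH S_INR.
Qed.

Lemma bsum_h2 k : bsum k (fun e => 1 / (INR e)^2) = h2 k.
Proof.
elim: k => [|k IH]; first by rewrite bsum0.
by rewrite bsumS IH.
Qed.

Lemma P_mu N : phi_over_n_sum N = \big[Rplus/0]_(1 <= d < N.+1) (mu d / INR d * INR (N %/ d)).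
Proof.
have := rearr (fun d => mu d / INR d) (fun _ => 1) N.
rewrite /=.
under eq_bigr do rewrite bsum_one.
move=> ->; rewrite P_big; apply: eq_big_nat => m /andP[m1 _].
rewrite -phi_sum //; rewrite /dsum; apply: eq_bigr => d _; ring.
Qed.

Lemma mu_h2 N : (0 < N)%N -> \big[Rplus/0]_(1 <= d < N.+1) (mu d / (INR d)^2 * h2 (N %/ d)) = 1.
Proof.
move=> N0.
have := rearr (fun d => mu d / (INR d)^2) (fun e => 1 / (INR e)^2) N.
rewrite /=.
under eq_bigr do rewrite bsum_h2.
move=> ->.
rewrite big_ltn // dsum1 mu1 divn1 /=.
rewrite big1_seq; first by field.
move=> m /andP [_]; rewrite mem_index_iota => /andP [m1 _].
have m0 : (0 < m)%N by apply: ltnW.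
rewrite /dsum.
have -> : \big[Rplus/0]_(d <- divisors m) (mu d / INR d ^ 2 * (1 / INR (m %/ d) ^ 2))
  = \big[Rplus/0]_(d <- divisors m) (/ (INR m)^2 * mu d).
  apply: eq_big_seq => d; rewrite -dvdn_divisors // => hd.
  have d0 : (0 < d)%N by apply: dvdn_gt0 hd.
  have hm : INR m = INR (m %/ d) * INR d by rewrite -{1}(divnK hd) mult_INR.
  have q0 : (0 < m %/ d)%N by rewrite divn_gt0 // dvdn_leq.
  rewrite hm; field; split; apply: INR_neq0 => //.
rewrite big_scaleR -/(dsum m mu) mu_sum //; ring.
Qed.

Lemma big_absR (s : seq nat) (F : nat -> R) :
  Rabs (\big[Rplus/0]_(i <- s) F i) <= \big[Rplus/0]_(i <- s) Rabs (F i).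
Proof.
elim: s => [|x s IH]; first by rewrite !big_nil Rabs_R0; lra.
rewrite !big_cons; apply: Rle_trans (Rabs_triang _ _) _; lra.
Qed.

Lemma big_leR (s : seq nat) (F G : nat -> R) :
  (forall i, i \in s -> F i <= G i) ->
  \big[Rplus/0]_(i <- s) F i <= \big[Rplus/0]_(i <- s) G i.
Proof.
elim: s => [|x s IH] h; first by rewrite !big_nil; lra.
rewrite !big_cons; apply: Rplus_le_compat.
- by apply: h; rewrite inE eqxx.
- by apply: IH => i hi; apply: h; rewrite inE hi orbT.
Qed.

Lemma big_subR (s : seq nat) (F G : nat -> R) :
  \big[Rplus/0]_(i <- s) F i - \big[Rplus/0]_(i <- s) G i = \big[Rplus/0]_(i <- s) (F i - G i).
Proof.
elim: s => [|x s IH]; first by rewrite !big_nil; ring.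
by rewrite !big_cons -IH; ring.
Qed.

Lemma g_bound c y k e : 1/2 <= c <= 1 -> 1 <= k -> k <= y < k + 1 -> 1/(k+1) <= e <= 1/k ->
  Rabs (k - y + c * y * e) <= c.
Proof.
move=> hc hk hy he.
have h1 : c * y * e <= c * y * (1 / k) by apply: Rmult_le_compat_l; [nra | lra].
have h2 : c * y * (1 / (k + 1)) <= c * y * e by apply: Rmult_le_compat_l; [nra | lra].
have e1 : c - (k - y + c * y * (1 / k)) = (y - k) * (1 - c / k) by field; lra.
have e2 : (k - y + c * y * (1 / (k + 1))) - (c - 1) = (k + 1 - y) * (1 - c / (k + 1)) by field; lra.
have p1 : 0 <= (y - k) * (1 - c / k).
  apply: Rmult_le_pos; first lra.
  have : c / k <= 1 by apply Rmult_le_reg_r with k; [lra | field_simplify; lra].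
  lra.
have p2 : 0 <= (k + 1 - y) * (1 - c / (k + 1)).
  apply: Rmult_le_pos; first lra.
  have : c / (k + 1) <= 1 by apply Rmult_le_reg_r with (k + 1); [lra | field_simplify; lra].
  lra.
apply: Rabs_le; lra.
Qed.

Definition Hn N := \big[Rplus/0]_(1 <= d < N.+1) (1 / INR d).

Lemma c_bounds : 0.6078 <= / zeta2 <= 0.6080.
Proof.
have [h1 h2] := PI_bounds.
have hz : 9.869 <= zeta2 * 6 <= 9.8703 by rewrite /zeta2; split; simpl; nra.
have z0 : 0 < zeta2 by lra.
split.
- apply Rmult_le_reg_r with zeta2 => //. rewrite Rinv_l; lra.
- apply Rmult_le_reg_r with zeta2 => //. rewrite Rinv_l; lra.
Qed.

Lemma floor_div N d x : (0 < d)%N -> (d <= N)%N -> INR N <= x < INR N + 1 ->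
  [/\ 1 <= INR (N %/ d), INR (N %/ d) <= x / INR d & x / INR d < INR (N %/ d) + 1].
Proof.
move=> d0 dN hx.
have hd := INR_pos d d0.
have k1 : (1 <= N %/ d)%N by rewrite divn_gt0.
split.
- by apply: (le_INR 1); apply/leP.
- apply Rmult_le_reg_r with (INR d) => //.
  rewrite /Rdiv Rmult_assoc Rinv_l ?Rmult_1_r; last lra.
  rewrite -mult_INR; apply: Rle_trans hx.1; apply: le_INR; apply/leP; exact: leq_divM.
- apply Rmult_lt_reg_r with (INR d) => //.
  rewrite /Rdiv Rmult_assoc Rinv_l ?Rmult_1_r; last lra.
  apply: Rlt_le_trans hx.2 _.
  have := ltn_ceil N d0; move/leP/le_INR.
  by rewrite mult_INR !S_INR.
Qed.

Lemma main_est N x : (0 < N)%N -> INR N <= x < INR N + 1 ->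
  Rabs (phi_over_n_sum N - x / zeta2) <= / zeta2 * Hn N.
Proof.
move=> N0 hx.
have [c1 c2] := c_bounds.
have z0 : zeta2 <> 0 by move=> h; move: c1; rewrite h Rinv_0; lra.
rewrite P_mu.
have hs := big_scaleR (index_iota 1 N.+1) (x / zeta2) (fun d => mu d / INR d ^ 2 * h2 (N %/ d)).
rewrite /= mu_h2 // Rmult_1_r in hs.
rewrite -hs big_subR.
apply: Rle_trans (big_absR _ _) _.
have hs2 := big_scaleR (index_iota 1 N.+1) (/ zeta2) (fun d => 1 / INR d).
rewrite /= in hs2; rewrite /Hn -hs2.
apply: big_leR => d; rewrite mem_index_iota => /andP [d1 dN].
rewrite ltnS in dN.
have d0 : (0 < d)%N by [].
have hd := INR_pos d d0.
have [k1 ky yk] := floor_div N d x d0 dN hx.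
set k := (N %/ d)%N in k1 ky yk *.
have hb := basel_id k.
have kn : (1 <= k)%coq_nat by apply/leP; rewrite divn_gt0.
have [t1 t2] := tail_bounds k kn.
have -> : mu d / INR d * INR k - x / zeta2 * (mu d / INR d ^ 2 * h2 k)
  = mu d / INR d * (INR k - x / INR d + / zeta2 * (x / INR d) * EE k).
  have -> : h2 k = zeta2 - EE k by rewrite /zeta2; lra.
  field; lra.
rewrite Rabs_mult Rabs_mult Rabs_inv (Rabs_right (INR d)); last lra.
have hg := g_bound (/ zeta2) (x / INR d) (INR k) (EE k) (conj (ltac:(lra) : 1/2 <= / zeta2) (ltac:(lra) : / zeta2 <= 1)) k1 (conj ky yk) (conj t1 t2).
have hm := mu_abs d.
have : 0 <= / INR d by left; apply: Rinv_0_lt_compat.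
have : 0 <= Rabs (INR k - x / INR d + / zeta2 * (x / INR d) * EE k) by apply: Rabs_pos.
move=> ha hi.
have := Rabs_pos (mu d).
move=> hm0.
rewrite /Rdiv Rmult_1_l.
have : Rabs (mu d) * / INR d <= / INR d by nra.
nra.
Qed.

Lemma ln_lb y : 0 < y -> 1 - 1 / y <= ln y.
Proof.
move=> y0; have := exp_ineq1_le (- ln y).
rewrite exp_Ropp exp_ln //; rewrite /Rdiv Rmult_1_l; lra.
Qed.

Lemma ln_mono a b : 0 < a -> a <= b -> ln a <= ln b.
Proof.
move=> a0 [hab|->]; last lra.
by left; apply: ln_increasing.
Qed.

Lemma HnS N : Hn N.+1 = Hn N + 1 / INR N.+1.
Proof. by rewrite /Hn big_nat_recr. Qed.

Lemma Hn_ub N : (0 < N)%N -> Hn N <= 1 + ln (INR N).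
Proof.
elim: N => [//|N IH] _.
case: (posnP N) => [->|N0].
- rewrite /Hn big_nat1 /= ln_1; lra.
- have {}IH := IH N0.
  rewrite HnS.
  have hN := INR_pos N N0.
  have e : ln (INR N.+1) = ln (INR N) + ln (INR N.+1 / INR N).
    rewrite /Rdiv ln_mult ?ln_Rinv; try lra; try (apply: Rinv_0_lt_compat; lra).
    rewrite S_INR; lra.
  have l := ln_lb (INR N.+1 / INR N) ltac:(rewrite S_INR; apply: Rdiv_lt_0_compat; lra).
  have e2 : 1 - 1 / (INR N.+1 / INR N) = 1 / INR N.+1 by rewrite S_INR; field; lra.
  lra.
Qed.

Lemma Hn_lb N : (7 <= N)%N -> 363 / 140 <= Hn N.
Proof.
elim: N => [//|N IH] hN.
case: (ltngtP N 6) => [h|h|->].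
- by move: hN; rewrite ltnS leqNgt h.
- have {}IH := IH h.
  rewrite HnS.
  have := INR_pos N.+1 isT => h1.
  have : 0 <= 1 / INR N.+1 by rewrite /Rdiv Rmult_1_l; left; apply: Rinv_0_lt_compat.
  lra.
- rewrite /Hn /index_iota /= !big_cons big_nil /=. lra.
Qed.

Lemma P_small : [/\ phi_over_n_sum 2 = 3/2, phi_over_n_sum 3 = 13/6, phi_over_n_sum 4 = 8/3,
  phi_over_n_sum 5 = 52/15 & phi_over_n_sum 6 = 19/5].
Proof. by split; rewrite /=; lra. Qed.

Lemma floor_facts x : 2 <= x -> (2 <= nat_floor x)%N /\ INR (nat_floor x) <= x < INR (nat_floor x) + 1.
Proof.
move=> hx.
have [b1 b2] := base_Int_part x.
have z0 : (0 <= Int_part x)%Z.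
  apply: le_IZR; lra.
have e : INR (nat_floor x) = IZR (Int_part x).
  by rewrite /nat_floor INR_IZR_INZ Z2Nat.id.
rewrite e; split; last lra.
have : INR 1 < INR (nat_floor x) by rewrite e /=; lra.
by move/INR_lt/ltP.
Qed.

Lemma xc_bounds N x : INR N <= x < INR N + 1 ->
  INR N * 0.6078 <= x / zeta2 <= (INR N + 1) * 0.608.
Proof.
move=> hx; have [c1 c2] := c_bounds.
have hN := pos_INR N.
rewrite /Rdiv; split; nra.
Qed.

Lemma final_small N x : (2 <= N)%N -> (N < 7)%N -> INR N <= x < INR N + 1 ->
  x / zeta2 - ln x <= phi_over_n_sum N <= x / zeta2 + ln x.
Proof.
move=> h2 h7 hx.
have hxc := xc_bounds N x hx.
have hN : 0 < INR N by apply: INR_pos; apply: ltn_trans h2.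
have hl : 1 - 1 / INR N <= ln x.
  apply: Rle_trans (ln_lb _ hN) (ln_mono _ _ hN hx.1).
have [p2 p3 p4 p5 p6] := P_small.
move: h2 h7 hx hxc hN hl.
case: N => [|[|[|[|[|[|[|n]]]]]]] //= _ _ hx hxc hN hl.
- lra.
- lra.
- lra.
- lra.
- lra.
Qed.

Lemma final_large N x : (7 <= N)%N -> INR N <= x < INR N + 1 ->
  x / zeta2 - ln x <= phi_over_n_sum N <= x / zeta2 + ln x.
Proof.
move=> h7 hx.
have N0 : (0 < N)%N by apply: leq_trans h7.
have hN : 0 < INR N by apply: INR_pos.
have hl := ln_mono _ _ hN hx.1.
have hm := main_est N x N0 hx.
have hu := Hn_ub N N0.
have hb := Hn_lb N h7.
have [c1 c2] := c_bounds.
have hc : / zeta2 * Hn N <= Hn N - 1 by nra.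
have ha := Rle_abs (phi_over_n_sum N - x / zeta2).
have hb2 := Rle_abs (- (phi_over_n_sum N - x / zeta2)).
rewrite Rabs_Ropp in hb2.
lra.
Qed.

Theorem lemma2p2 (x : R) (hx : 2 <= x) :
  x / zeta2 - ln x <= sum_phi_over_n x <= x / zeta2 + ln x.
Proof.
have [h2 hxN] := floor_facts x hx.
rewrite /sum_phi_over_n.
case: (leqP 7 (nat_floor x)) => h7.
- exact: final_large.
- exact: final_small.
Qed.
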